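(* Let $F$ be a field of characteristic $2$. Every separated symplectic quadratic space $(V,q,q')$ over $F$ decomposes as $(V,q,q')\simeq\varphi_{an}\perp\mu_1\perp\dots\perp\mu_n$ ($n\ge0$), where $\varphi_{an}$ is an anisotropic separated symplectic quadratic space which is uniquely determined up to isometry, and each $\mu_i$ is a one-dimensional metabolic separated symplectic quadratic space. Moreover, if $(V,q,q')$ is metabolic then $\varphi_{an}=0$.
   Context: A separated symplectic quadratic space over $F$ is a triple $(V,q,q')$ with $V$ a finite-dimensional $F$-vector space, $q$ a totally singular quadratic form on $V$ and $q'$ a totally singular quadratic form on $V^*$ (totally singular: $Q(\lambda x)=\lambda^2Q(x)$ and $Q(x+y)=Q(x)+Q(y)$). Isometry: a linear isomorphism $L\colon V_1\to V_2$ with $q_2\circ L=q_1$ and $q_1'\circ L^*=q_2'$. Orthogonal sum: $(V_1\oplus V_2,q_1\perp q_2,q_1'\perp q_2')$ with $(V_1\oplus V_2)^*=V_1^*\oplus V_2^*$. The space is isotropic if $q$ or $q'$ has a nonzero zero, anisotropic otherwise. It is metabolic if there is a subspace $U\subset V$ (any dimension) with $q(U)=0$ and $q'(U^o)=0$, where $U^o\subset V^*$ is the annihilator of $U$. $0$ denotes the space with $V=0$. *)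

(* Defs.v *)
From HB Require Import structures.
From mathcomp Require Import all_boot all_order all_algebra.
Set Implicit Arguments. Unset Strict Implicit. Unset Printing Implicit Defensive.
Import GRing.Theory.
Local Open Scope ring_scope.

(* Finite-dimensional F-vector spaces are represented in coordinates as
   'rV[F]_n; the dual V^* is identified with 'rV[F]_n via the pairing
   <x, w> = x *m w^T. *)

Definition tsing (F : fieldType) (n : nat) (Q : 'rV[F]_n -> F) : Prop :=
  (forall (l : F) x, Q (l *: x) = l ^+ 2 * Q x) /\
  (forall x y, Q (x + y) = Q x + Q y).

Record ssqs (F : fieldType) := SSQS {
  sdim : nat;
  sq : 'rV[F]_sdim -> F;
  sqd : 'rV[F]_sdim -> F }.   (* q' on V^* *)
Arguments sdim {F}. Arguments sq {F}. Arguments sqd {F}.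

Definition is_ssqs (F : fieldType) (S : ssqs F) : Prop :=
  tsing (sq S) /\ tsing (sqd S).

(* Isometry: a linear isomorphism L : V1 -> V2 (x |-> x *m A) with
   q2 o L = q1 and q1' o L^* = q2', where L^* (w) = w *m A^T. *)
Definition isometric (F : fieldType) (S1 S2 : ssqs F) : Prop :=
  exists A : 'M[F]_(sdim S1, sdim S2),
    [/\ row_free A, row_full A,
        (forall x, sq S2 (x *m A) = sq S1 x) &
        (forall w, sqd S1 (w *m A^T) = sqd S2 w)].

(* Orthogonal sum, with (V1 + V2)^* = V1^* + V2^* *)
Definition osum (F : fieldType) (S1 S2 : ssqs F) : ssqs F :=
  @SSQS F (sdim S1 + sdim S2)
    (fun x => sq S1 (lsubmx x) + sq S2 (rsubmx x))
    (fun w => sqd S1 (lsubmx w) + sqd S2 (rsubmx w)).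

Definition osum_list (F : fieldType) (phi : ssqs F) (mus : seq (ssqs F)) :=
  foldl (@osum F) phi mus.

Definition zero_space (F : fieldType) : ssqs F :=
  @SSQS F 0 (fun _ => 0) (fun _ => 0).

Definition anisotropic (F : fieldType) (S : ssqs F) : Prop :=
  (forall x, sq S x = 0 -> x = 0) /\ (forall w, sqd S w = 0 -> w = 0).

(* Metabolic: a subspace U (row space of a matrix) with q(U) = 0 and
   q'(U^o) = 0, U^o the annihilator of U in V^*. *)
Definition metabolic (F : fieldType) (S : ssqs F) : Prop :=
  exists U : 'M[F]_(sdim S),
    (forall u : 'rV_(sdim S), (u <= U)%MS -> sq S u = 0) /\
    (forall w : 'rV_(sdim S),
        (forall u : 'rV_(sdim S), (u <= U)%MS -> u *m w^T = 0) ->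
        sqd S w = 0).

Definition decomposition (F : fieldType) (S phi : ssqs F) (mus : seq (ssqs F)) :=
  [/\ is_ssqs phi, anisotropic phi,
      (forall i, (i < size mus)%N ->
         let mu := nth phi mus i in [/\ is_ssqs mu, sdim mu = 1%N & metabolic mu]) &
      isometric S (osum_list phi mus)].

(* Main.v *)
Require Import Defs.
From HB Require Import structures.
From mathcomp Require Import all_boot all_order all_algebra.
From Stdlib Require Import Classical.
From mathcomp Require Import zify.
Set Implicit Arguments. Unset Strict Implicit. Unset Printing Implicit Defensive.
Import GRing.Theory.
Local Open Scope ring_scope.

Section Basics.
Variable F : fieldType.

Lemma tsing0 n (Q : 'rV[F]_n -> F) : tsing Q -> Q 0 = 0.
Proof. by case=> HZ _; rewrite -(scale0r (0 : 'rV_n)) HZ expr2 !mul0r. Qed.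

Lemma tsingN n (Q : 'rV[F]_n -> F) x : tsing Q -> Q (- x) = Q x.
Proof. by case=> HZ _; rewrite -scaleN1r HZ expr2 mulN1r opprK mul1r. Qed.

Lemma tsingB n (Q : 'rV[F]_n -> F) x y : tsing Q -> Q (x - y) = Q x + Q y.
Proof. by move=> H; rewrite H.2 tsingN. Qed.

Lemma tsing_mul n p (Q : 'rV[F]_n -> F) (B : 'M_(p, n)) :
  tsing Q -> tsing (fun y => Q (y *m B)).
Proof.
case=> HZ HD; split=> [l x|x y]; first by rewrite -scalemxAl HZ.
by rewrite mulmxDl HD.
Qed.

Lemma tsing_span n m (Q : 'rV[F]_n -> F) (K : 'M_(m, n)) :
  tsing Q -> (forall i, Q (row i K) = 0) -> forall z, Q (z *m K) = 0.
Proof.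
move=> HQ HK z; rewrite mulmx_sum_row.
apply: (big_ind (fun v => Q v = 0)); first exact: tsing0.
  by move=> a b Ha Hb; rewrite HQ.2 Ha Hb addr0.
by move=> i _; rewrite HQ.1 HK mulr0.
Qed.

Lemma colM m n p (A : 'M[F]_(m, n)) (B : 'M_(n, p)) j :
  col j (A *m B) = A *m col j B.
Proof. by apply/matrixP=> i k; rewrite !mxE; apply: eq_bigr => l _; rewrite !mxE. Qed.

Lemma DA p q s (C : 'M[F]_(p, q)) (R : 'M_(s, q)) :
  (forall w : 'rV_q, C *m w^T = 0 -> R *m w^T = 0) -> (R <= C)%MS.
Proof.
move=> H; rewrite submxE; apply/eqP/matrixP => i j.
have := H (col j (cokermx C))^T; rewrite trmxK -!colM mulmx_coker col0.
move=> /(_ erefl) /matrixP /(_ i 0).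
move=> E; rewrite [RHS]mxE; move: E; rewrite [RHS]mxE => <-.
rewrite !mxE; apply: eq_bigr => l _; by rewrite !mxE.
Qed.

Lemma rank_step m n (K : 'M[F]_(m, n)) (v : 'rV_n) :
  ~~ (v <= K)%MS -> (\rank K < \rank (col_mx K v))%N.
Proof.
move=> nvK; rewrite -(addsmxE K v).1; apply: rank_ltmx.
rewrite ltmxE addsmxSl /=; apply: contra nvK => H.
exact: submx_trans (addsmxSr K v) H.
Qed.

Lemma span_exists n (Q : 'rV[F]_n -> F) : tsing Q ->
  exists m (K : 'M_(m, n)), (forall i, Q (row i K) = 0) /\
                            (forall v, Q v = 0 -> (v <= K)%MS).
Proof.
move=> HQ.
suff H: forall d m (K : 'M_(m,n)), (n - \rank K <= d)%N ->
  (forall i, Q (row i K) = 0) -> exists m' (K' : 'M_(m', n)),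
  (forall i, Q (row i K') = 0) /\ (forall v, Q v = 0 -> (v <= K')%MS).
  by apply: (H n 0%N 0) => [|[]]; rewrite ?leq_subr.
elim=> [|d IH] m K Hd HK;
  (case: (classic (forall v, Q v = 0 -> (v <= K)%MS)) => [Hall|Hn];
   first by exists m, K);
  have [v Hv] := not_all_ex_not _ _ Hn;
  have [Qv nvK] : Q v = 0 /\ ~~ (v <= K)%MS
    by split; [apply: NNPP => H; apply: Hv => /H | apply/negP => H; apply: Hv].
- have := rank_step nvK; have := rank_leq_col (col_mx K v); lia.
- apply: (IH _ (col_mx K v)).
    have := rank_step nvK; have := rank_leq_col (col_mx K v); lia.
  move=> i; case: (split_ordP i) => j ->; first by rewrite rowKu.
  by rewrite rowKd row_id.
Qed.
End Basics.
Section Spaces.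
Variable F : fieldType.
Implicit Types S T : ssqs F.

Definition inE S (x : 'rV_(sdim S)) := forall w, sqd S w = 0 -> x *m w^T = 0.
Definition wiso S1 S2 (A : 'M[F]_(sdim S1, sdim S2)) :=
  (forall x, sq S2 (x *m A) = sq S1 x) /\ (forall w, sqd S1 (w *m A^T) = sqd S2 w).

Lemma inE_sub S (x y : 'rV_(sdim S)) : inE x -> inE y -> inE (x - y).
Proof. by move=> Hx Hy w Hw; rewrite mulmxBl Hx // Hy // subr0. Qed.

Lemma wiso_inE S1 S2 A (x : 'rV_(sdim S1)) : @wiso S1 S2 A -> inE x -> inE (x *m A).
Proof.
move=> [_ H2] Hx w Hw; rewrite -mulmxA.
have ->: A *m w^T = (w *m A^T)^T by rewrite trmx_mul trmxK.
by apply: Hx; rewrite H2.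
Qed.

Lemma wiso_comp S1 S2 S3 A B : @wiso S1 S2 A -> @wiso S2 S3 B -> wiso (A *m B).
Proof.
move=> [A1 A2] [B1 B2]; split=> [x|w]; first by rewrite mulmxA B1 A1.
by rewrite trmx_mul mulmxA A2 B2.
Qed.

Lemma annE S (d : 'rV_(sdim S)) : is_ssqs S ->
  (forall x, inE x -> x *m d^T = 0) -> sqd S d = 0.
Proof.
move=> [_ HQ] Hd; have [m [K [HK1 HK2]]] := span_exists HQ.
have: (d <= K)%MS.
  apply: DA => w Kw.
  have: inE w.
    move=> v /HK2 /submxP [z ->].
    by rewrite trmx_mul mulmxA -(trmxK w) -trmx_mul Kw trmx0 mul0mx.
  by move=> /Hd Hw; rewrite -(trmxK (d *m w^T)) trmx_mul trmxK Hw trmx0.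
by case/submxP=> z ->; apply: tsing_span.
Qed.

Lemma metab_inE S (x : 'rV_(sdim S)) : metabolic S -> inE x -> sq S x = 0.
Proof.
move=> [U [HU1 HU2]] Hx; apply: HU1; apply: DA => w Uw; apply: Hx; apply: HU2.
by move=> u /submxP [z ->]; rewrite -mulmxA Uw mulmx0.
Qed.

End Spaces.
Section Core.
Variable F : fieldType.
Implicit Types S T : ssqs F.

Definition NF T phi (P : 'M[F]_(sdim T, sdim phi)) :=
  (forall u, sqd T (u *m P^T) = sqd phi u) /\
  (forall x, inE x -> sq T x = sq phi (x *m P)).

Lemma section T phi P : is_ssqs T -> anisotropic phi -> @NF T phi P ->
  exists S : 'M_(sdim phi, sdim T), S *m P = 1%:M /\ forall y, inE (y *m S).
Proof.
move=> [_ HQ] [_ Han] [NF2 NF1]; have [m [K [HK1 HK2]]] := span_exists HQ.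
have: (row_mx (1%:M : 'M_(sdim phi)) (0 : 'M_(sdim phi, m)) <= row_mx P K^T)%MS.
  apply: DA => w; rewrite -(hsubmxK w) tr_row_mx !mul_row_col mul0mx addr0 mul1mx.
  set u := lsubmx w; set v := rsubmx w => Cw.
  have E: u *m P^T = - (v *m K).
    apply/eqP; rewrite -addr_eq0; apply/eqP.
    by rewrite -(trmxK (u *m P^T)) -(trmxK (v *m K)) -raddfD /= !trmx_mul !trmxK Cw trmx0.
  have: sqd phi u = 0 by rewrite -NF2 E tsingN // tsing_span.
  by move/Han => ->; rewrite trmx0.
case/submxP => D; rewrite mul_mx_row => /eq_row_mx [H1 H2].
exists D; split=> [|y w /HK2 /submxP [z ->]]; first by rewrite H1.
by rewrite trmx_mul -!mulmxA (mulmxA D) -H2 mul0mx mulmx0.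
Qed.

Lemma row_free_inj0 m n (L : 'M[F]_(m, n)) :
  (forall y : 'rV_m, y *m L = 0 -> y = 0) -> row_free L.
Proof.
move=> H; rewrite -kermx_eq0; apply/eqP/row_matrixP => i.
rewrite row0; apply: H; by rewrite -row_mul mulmx_ker row0.
Qed.

Lemma core T1 T2 phi1 phi2 (P1 : 'M_(sdim T1, sdim phi1)) (P2 : 'M_(sdim T2, sdim phi2)) (B : 'M_(sdim T1, sdim T2)) :
  is_ssqs T1 -> is_ssqs T2 -> is_ssqs phi1 -> is_ssqs phi2 ->
  anisotropic phi1 -> anisotropic phi2 ->
  NF P1 -> NF P2 -> wiso B ->
  exists L : 'M_(sdim phi1, sdim phi2), wiso L /\ row_free L.
Proof.
move=> HT1 HT2 Hp1 Hp2 An1 An2 N1 N2 W.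
have [S1 [SP1 SE1]] := section HT1 An1 N1.
have qL: forall y, sq phi2 (y *m (S1 *m B *m P2)) = sq phi1 y.
  move=> y; rewrite !mulmxA -N2.2; last exact: wiso_inE (SE1 y).
  by rewrite W.1 N1.2 // -mulmxA SP1 mulmx1.
exists (S1 *m B *m P2); split; last first.
  apply: row_free_inj0 => y Hy; apply: An1.1; by rewrite -qL Hy tsing0 //; case: Hp2.
split=> // u.
set w1 := u *m P2^T *m B^T.
set u1 := w1 *m S1^T.
have ->: u *m (S1 *m B *m P2)^T = u1 by rewrite /u1 /w1 !trmx_mul !mulmxA.
have d0: sqd T1 (w1 - u1 *m P1^T) = 0.
  apply: annE => // x Hx.
  set n := x - x *m P1 *m S1.
  have Hn: inE n by apply: inE_sub => //.
  have nP: n *m P1 = 0 by rewrite /n mulmxBl -[x *m P1 *m S1 *m P1]mulmxA SP1 mulmx1 subrr.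
  have qn: sq T1 n = 0 by rewrite N1.2 // nP tsing0 //; case: Hp1.
  have nBP: n *m B *m P2 = 0.
    apply: An2.1; rewrite -N2.2; last exact: wiso_inE Hn.
    by rewrite W.1.
  have Ex: x = x *m P1 *m S1 + n by rewrite /n addrC subrK.
  rewrite (linearB trmx) /= mulmxBr /u1 /w1 !trmx_mul !trmxK.
  by rewrite !mulmxA -!mulmxBl -/n nBP mul0mx.
have ->: sqd phi2 u = sqd T1 w1 by rewrite /w1 W.2 N2.1.
rewrite -(subrK (u1 *m P1^T) w1) HT1.2.2 d0 add0r N1.1 //.
Qed.
End Core.
Section Osum.
Variable F : fieldType.
Implicit Types S T : ssqs F.

Lemma tsing_osum m n (Q1 : 'rV[F]_m -> F) (Q2 : 'rV[F]_n -> F) :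
  tsing Q1 -> tsing Q2 -> tsing (fun x => Q1 (lsubmx x) + Q2 (rsubmx x)).
Proof.
move=> [A1 A2] [B1 B2]; split=> [l x|x y].
  by rewrite !linearZ /= A1 B1 mulrDr.
by rewrite !linearD /= A2 B2 addrACA.
Qed.

Lemma is_ssqs_osum S1 S2 : is_ssqs S1 -> is_ssqs S2 -> is_ssqs (osum S1 S2).
Proof. by move=> [? ?] [? ?]; split; apply: tsing_osum. Qed.

Lemma inE_osum S1 S2 (x : 'rV_(sdim (osum S1 S2))) :
  is_ssqs S1 -> is_ssqs S2 ->
  inE x -> inE (lsubmx x : 'rV_(sdim S1)) /\ inE (rsubmx x : 'rV_(sdim S2)).
Proof.
move=> [_ H1] [_ H2] Hx; split=> w Hw.
  have := Hx (row_mx w 0); rewrite /= row_mxKl row_mxKr Hw (tsing0 H2) addr0.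
  by rewrite -{1}(hsubmxK x) tr_row_mx mul_row_col trmx0 mulmx0 addr0 => ->.
have := Hx (row_mx 0 w); rewrite /= row_mxKl row_mxKr Hw (tsing0 H1) addr0.
by rewrite -{1}(hsubmxK x) tr_row_mx mul_row_col trmx0 mulmx0 add0r => ->.
Qed.

Lemma NF_osum T phi (P : 'M_(sdim T, sdim phi)) mu :
  is_ssqs T -> is_ssqs mu -> metabolic mu -> NF P ->
  NF (col_mx P (0 : 'M_(sdim mu, sdim phi)) : 'M_(sdim (osum T mu), sdim phi)).
Proof.
move=> HT Hm Mm [N2 N1]; split=> [u|x Hx].
  rewrite /= tr_col_mx trmx0 mul_mx_row mulmx0 row_mxKl row_mxKr N2 tsing0 ?addr0 //.
  by case: Hm.
have [Hl Hr] := inE_osum HT Hm Hx.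
rewrite /= (metab_inE Mm Hr) addr0 N1 //.
by rewrite -{2}(hsubmxK x) mul_row_col mulmx0 addr0.
Qed.

Lemma NF_list phi mus : is_ssqs phi ->
  (forall i, (i < size mus)%N -> is_ssqs (nth phi mus i) /\ metabolic (nth phi mus i)) ->
  is_ssqs (osum_list phi mus) /\
  exists P : 'M[F]_(sdim (osum_list phi mus), sdim phi), NF P.
Proof.
move=> Hp; elim/last_ind: mus => [|s mu IH] Hi.
  split=> //; exists 1%:M; split=> [u|x _]; by rewrite /= ?trmx1 mulmx1.
have Hs: forall i, (i < size s)%N -> is_ssqs (nth phi s i) /\ metabolic (nth phi s i).
  move=> i Hi'; have := Hi i; rewrite size_rcons nth_rcons Hi'; apply.
  exact: ltnW.
have [HT [P HP]] := IH Hs.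
have := Hi (size s); rewrite size_rcons nth_rcons ltnn eqxx => /(_ (ltnSn _)) [Hm Mm].
rewrite /osum_list foldl_rcons -/(osum_list phi s).
split; first exact: is_ssqs_osum.
by exists (col_mx P 0); apply: NF_osum.
Qed.
End Osum.
Section Iso.
Variable F : fieldType.
Implicit Types S T : ssqs F.

Lemma iso_wiso S T : isometric S T ->
  exists (A : 'M[F]_(sdim S, sdim T)) (A' : 'M_(sdim T, sdim S)), wiso A /\ wiso A'.
Proof.
move=> [A [/row_freeP [R AR] /row_fullP [L LA] H1 H2]].
have LR: L = R by rewrite -[L]mulmx1 -AR mulmxA LA mul1mx.
exists A, L; split; first by split.
split=> [x|w]; first by rewrite -H1 -mulmxA LA mulmx1.
by rewrite -H2 -mulmxA -trmx_mul LR AR trmx1 mulmx1.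
Qed.

Lemma iso_intro S T (A : 'M[F]_(sdim S, sdim T)) R L :
  A *m R = 1%:M -> L *m A = 1%:M -> wiso A -> isometric S T.
Proof.
move=> AR LA [H1 H2]; exists A; split=> //.
  by apply/row_freeP; exists R.
by apply/row_fullP; exists L.
Qed.

Lemma iso_inv2 S T : isometric S T -> exists (A : 'M[F]_(sdim S, sdim T)) R L,
  [/\ A *m R = 1%:M, L *m A = 1%:M & wiso A].
Proof.
move=> [A [/row_freeP [R AR] /row_fullP [L LA] H1 H2]].
by exists A, R, L; split.
Qed.

Lemma iso_refl S : isometric S S.
Proof. by apply: (@iso_intro _ _ 1%:M 1%:M 1%:M); rewrite ?mulmx1 //; split=> ?; rewrite ?trmx1 mulmx1. Qed.

Lemma iso_trans S1 S2 S3 : isometric S1 S2 -> isometric S2 S3 -> isometric S1 S3.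
Proof.
move=> /iso_inv2 [A [R [L [AR LA WA]]]] /iso_inv2 [B [R' [L' [BR LB WB]]]].
apply: (@iso_intro _ _ (A *m B) (R' *m R) (L' *m L)); last exact: wiso_comp.
  by rewrite mulmxA -(mulmxA A) BR mulmx1 AR.
by rewrite mulmxA -(mulmxA L') LA mulmx1 LB.
Qed.

Lemma iso_osum S1 S2 mu : isometric S1 S2 -> isometric (osum S1 mu) (osum S2 mu).
Proof.
move=> /iso_inv2 [A [R [L [AR LA [H1 H2]]]]].
apply: (@iso_intro _ _ (block_mx A 0 0 (1%:M : 'M_(sdim mu)) : 'M_(sdim (osum S1 mu), sdim (osum S2 mu)))
   (block_mx R 0 0 1%:M) (block_mx L 0 0 1%:M)).
- by rewrite mulmx_block AR !mulmx0 !mul0mx mulmx1 !addr0 add0r -scalar_mx_block.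
- by rewrite mulmx_block LA !mulmx0 !mul0mx mulmx1 !addr0 add0r -scalar_mx_block.
split=> [x|w] /=.
  by rewrite -(hsubmxK x) mul_row_block !mulmx0 mulmx1 addr0 add0r !row_mxKl !row_mxKr H1.
rewrite tr_block_mx !trmx0 trmx1 -(hsubmxK w) mul_row_block !mulmx0 mulmx1 addr0 add0r.
by rewrite !row_mxKl !row_mxKr H2.
Qed.
End Iso.
Section Split.
Variable F : fieldType.
Implicit Types S T : ssqs F.

Definition splitL S r (A N : 'M[F]_(r + 1, sdim S)) : ssqs F :=
  @SSQS F r (fun y => sq S (y *m usubmx A)) (fun v => sqd S (v *m usubmx N)).
Definition splitR S r (A N : 'M[F]_(r + 1, sdim S)) : ssqs F :=
  @SSQS F 1 (fun t => sq S (t *m dsubmx A)) (fun s => sqd S (s *m dsubmx N)).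

Lemma split_iso S r (A N : 'M[F]_(r + 1, sdim S)) : is_ssqs S ->
  N^T *m A = 1%:M -> (r + 1 = sdim S)%N ->
  [/\ is_ssqs (splitL A N), is_ssqs (splitR A N) &
      isometric S (osum (splitL A N) (splitR A N))].
Proof.
move=> [H1 H2] NA Hr; split; try by split; apply: tsing_mul.
have rk: \rank N^T = sdim S.
  apply/eqP; rewrite eqn_leq rank_leq_row /=.
  by have := mxrankM_maxl N^T A; rewrite NA mxrank1.
exists (N^T : 'M_(sdim S, sdim (osum (splitL A N) (splitR A N)))); split.
- by rewrite /row_free rk.
- by rewrite /row_full rk; apply/eqP; exact: esym Hr.
- move=> x /=; rewrite -H1.2 -mul_row_col hsubmxK vsubmxK.
  by rewrite -mulmxA NA mulmx1.
- move=> w /=; rewrite -H2.2 -mul_row_col hsubmxK vsubmxK trmxK //.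
Qed.

Lemma compl_full n (v : 'rV[F]_n) : v != 0 ->
  row_full (col_mx (row_base (v^C)%MS) v) /\ (\rank (v^C)%MS + 1 = n)%N.
Proof.
move=> nz; split.
  rewrite /row_full -(addsmxE _ _).1 (adds_eqmx (eq_row_base _) (eqmx_refl v)).1.
  by rewrite addsmxC; apply: addsmx_compl_full.
rewrite mxrank_compl rank_rV nz; have := rank_leq_col v; rewrite rank_rV nz.
by move=> H; rewrite subnK.
Qed.
End Split.
Section Exist.
Variable F : fieldType.
Implicit Types S T : ssqs F.

Lemma split_q S (x : 'rV[F]_(sdim S)) : is_ssqs S -> x != 0 -> sq S x = 0 ->
  exists S' mu, [/\ is_ssqs S', is_ssqs mu, (sdim S' < sdim S)%N, sdim mu = 1%N /\
                    metabolic mu & isometric S (osum S' mu)].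
Proof.
move=> HS nz qx; have [/row_fullP [L LA] Hr] := compl_full nz.
set A := col_mx (row_base (x^C)%MS) x.
have NA : (L^T)^T *m A = 1%:M by rewrite trmxK.
have [H1 H2 H3] := @split_iso _ S _ A L^T HS NA Hr.
exists (splitL A L^T), (splitR A L^T); split => //.
  by rewrite /=; lia.
split=> //.
exists 1%:M; split=> [u _|w Hw].
  by rewrite /= col_mxKd (mx11_scalar u) mul_scalar_mx HS.1.1 qx mulr0.
have ->: w = 0.
  have := Hw 1%:M (submx1 _); rewrite mul1mx => /(congr1 trmx).
  by rewrite trmxK trmx0.
exact: tsing0 H2.2.
Qed.

Lemma split_qd S (x : 'rV[F]_(sdim S)) : is_ssqs S -> x != 0 -> sqd S x = 0 ->
  exists S' mu, [/\ is_ssqs S', is_ssqs mu, (sdim S' < sdim S)%N, sdim mu = 1%N /\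
                    metabolic mu & isometric S (osum S' mu)].
Proof.
move=> HS nz qx; have [/row_fullP [L LA] Hr] := compl_full nz.
set B := col_mx (row_base (x^C)%MS) x.
have NA : B^T *m L^T = 1%:M by rewrite -trmx_mul LA trmx1.
have [H1 H2 H3] := @split_iso _ S _ L^T B HS NA Hr.
exists (splitL L^T B), (splitR L^T B); split => //.
  by rewrite /=; lia.
split=> //.
exists 0; split=> [u|w Hw].
  by rewrite submx0 => /eqP ->; exact: tsing0 H2.1.
by rewrite /= col_mxKd (mx11_scalar w) mul_scalar_mx HS.2.1 qx mulr0.
Qed.

Lemma existence S : is_ssqs S -> exists phi mus, decomposition S phi mus.
Proof.
move: {2}(sdim S) (leqnn (sdim S)) => n; elim: n S => [|n IH] S Hn HS.
  exists S, [::]; split=> //; last exact: iso_refl.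
  by split=> x _; apply/rowP => -[i Hi]; exfalso; move: Hi Hn; lia.
case: (classic (anisotropic S)) => [An|nAn].
  by exists S, [::]; split=> //; exact: iso_refl.
have [S' [mu [HS' Hmu lt [dmu Mmu] Iso]]] :
  exists S' mu, [/\ is_ssqs S', is_ssqs mu, (sdim S' < sdim S)%N, sdim mu = 1%N /\
                    metabolic mu & isometric S (osum S' mu)].
  case: (classic (forall x, sq S x = 0 -> x = 0)) => [Hq|Hq].
    have [w Hw] : exists w, ~ (sqd S w = 0 -> w = 0).
      apply: not_all_ex_not => H; exact: nAn.
    apply: (split_qd (x := w)) => //; last by apply: NNPP => H; apply: Hw.
    by apply/eqP => E; apply: Hw.
  have [w Hw] := not_all_ex_not _ _ Hq.
  apply: (split_q (x := w)) => //; last by apply: NNPP => H; apply: Hw.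
  by apply/eqP => E; apply: Hw.
have [phi [mus [Hp Ap Hmus IsoS']]] := IH S' (leq_trans lt Hn) HS'.
exists phi, (rcons mus mu); split=> //.
  move=> i; rewrite size_rcons ltnS leq_eqVlt => /orP [/eqP ->|Hi].
    by rewrite nth_rcons ltnn eqxx.
  by rewrite nth_rcons Hi; apply: Hmus.
rewrite /osum_list foldl_rcons -/(osum_list phi mus).
exact: iso_trans Iso (iso_osum _ IsoS').
Qed.
End Exist.

Theorem proposition2p4 (F : fieldType) (charF : (2%N \in [pchar F]))
  (S : ssqs F) (HS : is_ssqs S) :
  (exists (phi : ssqs F) (mus : seq (ssqs F)), decomposition S phi mus) /\
  (forall (phi1 phi2 : ssqs F) (mus1 mus2 : seq (ssqs F)),
      decomposition S phi1 mus1 -> decomposition S phi2 mus2 ->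
      isometric phi1 phi2) /\
  (metabolic S ->
   forall (phi : ssqs F) (mus : seq (ssqs F)),
     decomposition S phi mus -> sdim phi = 0%N).
Proof.
split; first exact: existence.
split.
  move=> phi1 phi2 mus1 mus2 [Hp1 An1 Hm1 I1] [Hp2 An2 Hm2 I2].
  have [HT1 [P1 N1]] := NF_list Hp1 (fun i Hi => match Hm1 i Hi with And3 a _ c => conj a c end).
  have [HT2 [P2 N2]] := NF_list Hp2 (fun i Hi => match Hm2 i Hi with And3 a _ c => conj a c end).
  have [A1 [A1' [W1 W1']]] := iso_wiso I1.
  have [A2 [A2' [W2 W2']]] := iso_wiso I2.
  have [L [WL FL]] := core HT1 HT2 Hp1 Hp2 An1 An2 N1 N2 (wiso_comp W1' W2).
  have [L' [WL' FL']] := core HT2 HT1 Hp2 Hp1 An2 An1 N2 N1 (wiso_comp W2' W1).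
  exists L; split=> //; try by case: WL.
  move: FL FL'; rewrite /row_free /row_full => /eqP r1 /eqP r2.
  have a := rank_leq_col L; have b := rank_leq_col L'.
  rewrite r1 in a; rewrite r2 in b; by rewrite r1 eqn_leq a b.
move=> Met phi mus [Hp An Hm I].
have [HT [P N]] := NF_list Hp (fun i Hi => match Hm i Hi with And3 a _ c => conj a c end).
have [A [A' [W W']]] := iso_wiso I.
have [S1 [SP SE]] := section HT An N.
have Hy: forall y : 'rV[F]_(sdim phi), y = 0.
  move=> y; apply: An.1; rewrite -[y]mulmx1 -SP mulmxA -N.2 //.
  rewrite -W'.1; exact: metab_inE Met (wiso_inE W' (SE y)).
case E: (sdim phi) => [//|k].
have lt: (0 < sdim phi)%N by rewrite E.
have := Hy (const_mx 1) => /matrixP /(_ 0 (Ordinal lt)); rewrite !mxE => /eqP.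
by rewrite oner_eq0.
Qed.
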